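(* With $\alpha(m)=\frac12(m^2-m)$ and $\mathcal{A}:=\sum_{m\ge2}\frac1m\sum_{k=\alpha(m)}^{\beta(m)}\frac1k$, where $\beta(m)=\frac12(m^2+m)-1$, one has $$\mathcal{A}=\sum_{m\ge2}\frac{H_{\alpha(m+1)-1}}{m^2+m}=\frac{\gamma}{2}+\frac12\sum_{j\ge3}\frac{\psi(\alpha(j))}{\alpha(j)},$$ and all these series converge.
   Context: $H_n=\sum_{j=1}^n\frac1j$ is the $n$-th harmonic number ($H_0=0$), $\gamma$ is Euler's constant, and $\psi=\Gamma'/\Gamma$ is the digamma function. *)

(* Defs.v *)
From Stdlib Require Import Reals.
From Coquelicot Require Import Coquelicot.
Open Scope R_scope.

Fixpoint harmonic (n : nat) : R :=
  match n with
  | O => 0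
  | S k => harmonic k + / INR (S k)
  end.

Definition alpha (m : nat) : nat := ((m * m - m) / 2)%nat.
Definition beta (m : nat) : nat := ((m * m + m) / 2 - 1)%nat.

Definition euler_gamma : R := real (Lim_seq (fun n => harmonic n - ln (INR n))).

Definition Gamma (x : R) : R :=
  RInt_gen (fun t => Rpower t (x - 1) * exp (- t)) (at_right 0) (Rbar_locally p_infty).

Definition digamma (x : R) : R := Derive Gamma x / Gamma x.

(* The three series, reindexed to start at 0. *)
Definition termA (n : nat) : R :=
  let m := (n + 2)%nat in
  / INR m * sum_n_m (fun k => / INR k) (alpha m) (beta m).

Definition termB (n : nat) : R :=
  let m := (n + 2)%nat in
  harmonic (alpha (m + 1) - 1) / (INR m ^ 2 + INR m).

Definition termC (n : nat) : R :=
  let j := (n + 3)%nat in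
  digamma (INR (alpha j)) / INR (alpha j).

(* Main.v *)
Require Import Defs.
From Stdlib Require Import Reals Lra Lia Arith Factorial.
From Coquelicot Require Import Coquelicot.
Open Scope R_scope.

Lemma ballR (x : R) (e : posreal) y : ball x e y <-> Rabs (y - x) < e.
Proof. split; intro H; exact H. Qed.

Lemma ar0_intro (P : R -> Prop) d : 0 < d -> (forall t, 0 < t < d -> P t) -> at_right 0 P.
Proof.
  intros Hd H. exists (mkposreal d Hd). intros y Hy Hy0. apply H. split; [lra|].
  pose proof (proj1 (ballR _ _ _) Hy) as Hy1. simpl in Hy1. rewrite Rminus_0_r, Rabs_pos_eq in Hy1; lra.
Qed.

Lemma ar0_elim (P : R -> Prop) : at_right 0 P -> exists d, 0 < d /\ forall t, 0 < t < d -> P t.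
Proof.
  intros [e He]. exists e. split; [apply cond_pos|]. intros t Ht. apply He; [|lra].
  apply ballR. rewrite Rminus_0_r, Rabs_pos_eq; lra.
Qed.

Lemma pinf_intro (P : R -> Prop) M : (forall t, M < t -> P t) -> Rbar_locally p_infty P.
Proof. intros H. exists M. exact H. Qed.

Lemma pinf_elim (P : R -> Prop) : Rbar_locally p_infty P -> exists M, forall t, M < t -> P t.
Proof. intros [M H]. exists M. exact H. Qed.

Notation FA := (at_right 0).
Notation FB := (Rbar_locally p_infty).

Lemma fprod_elim (P : R * R -> Prop) : filter_prod FA FB P ->
  exists d M, 0 < d /\ forall a b, 0 < a < d -> M < b -> P (a, b).
Proof.
  intros [Q R HQ HR H]. apply ar0_elim in HQ. apply pinf_elim in HR.
  destruct HQ as [d [Hd HQ]]. destruct HR as [M HM].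
  exists d, M. split; auto.
Qed.

Lemma fprod_intro (P : R * R -> Prop) d M : 0 < d -> (forall a b, 0 < a < d -> M < b -> P (a, b)) ->
  filter_prod FA FB P.
Proof.
  intros Hd H. apply Filter_prod with (fun a => 0 < a < d) (fun b => M < b).
  - apply ar0_intro with d; auto.
  - apply pinf_intro with M; auto.
  - intros; apply H; auto.
Qed.

Lemma ex_RInt_cpos (f : R -> R) u v : (forall t, 0 < t -> continuous f t) -> 0 < u -> 0 < v -> ex_RInt f u v.
Proof.
  intros Hf Hu Hv. apply (@ex_RInt_continuous R_CompleteNormedModule). intros z Hz. apply Hf.
  destruct Hz as [Hz _]. eapply Rlt_le_trans; [|exact Hz]. unfold Rmin; destruct Rle_dec; lra.
Qed.

Lemma RInt_abs_dom (f g : R -> R) a b : 0 < a -> 0 < b ->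
  (forall t, 0 < t -> continuous f t) -> (forall t, 0 < t -> continuous g t) ->
  (forall t, 0 < t -> Rabs (f t) <= g t) ->
  Rabs (RInt f a b) <= Rabs (RInt g a b).
Proof.
  intros Ha Hb Hf Hg Hfg.
  assert (Ef : forall u v, 0 < u -> 0 < v -> ex_RInt f u v) by (intros; apply ex_RInt_cpos; auto).
  assert (Eg : forall u v, 0 < u -> 0 < v -> ex_RInt g u v) by (intros; apply ex_RInt_cpos; auto).
  assert (K : forall u v, 0 < u -> 0 < v -> u <= v -> Rabs (RInt f u v) <= Rabs (RInt g u v)).
  { intros u v Hu Hv Huv.
    eapply Rle_trans. apply abs_RInt_le; auto.
    assert (Ea : ex_RInt (fun t => Rabs (f t)) u v).
    { apply ex_RInt_cpos; auto. intros t Ht. apply continuous_comp. apply Hf; auto. apply continuous_Rabs. }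
    apply Rle_trans with (RInt g u v). apply RInt_le; auto. intros x Hx. apply Hfg. lra.
    apply Rle_abs. }
  destruct (Rle_dec a b) as [H|H].
  - apply K; auto.
  - rewrite <- (opp_RInt_swap f), <- (opp_RInt_swap g) by (apply Ef || apply Eg; auto).
    unfold opp; simpl. rewrite !Rabs_Ropp. apply K; auto; lra.
Qed.

Lemma chasR (f : R -> R) a b c : ex_RInt f a b -> ex_RInt f b c -> RInt f a b + RInt f b c = RInt f a c.
Proof. intros H1 H2. exact (RInt_Chasles (V := R_CompleteNormedModule) f a b c H1 H2). Qed.

Notation RI f := (fun ab : R * R => RInt f (fst ab) (snd ab)).

Lemma gen_to_lim (g : R -> R) (l : R) : is_RInt_gen g FA FB l ->
  filterlim (RI g) (filter_prod FA FB) (locally l).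
Proof.
  intros H P HP. specialize (H P HP). unfold filtermapi in H. unfold filtermap.
  eapply filter_imp; [|exact H]. intros [a b] [y [Hy Py]]. simpl in *.
  apply (is_RInt_unique (V:=R_CompleteNormedModule)) in Hy. rewrite Hy. exact Py.
Qed.

Lemma lim_to_gen (g : R -> R) (l : R) : (forall t, 0 < t -> continuous g t) ->
  filterlim (RI g) (filter_prod FA FB) (locally l) -> is_RInt_gen g FA FB l.
Proof.
  intros Hg H P HP. specialize (H P HP). unfold filtermapi. unfold filtermap in H.
  assert (H2 : filter_prod FA FB (fun ab : R * R => 0 < fst ab /\ 0 < snd ab)).
  { apply fprod_intro with 1 0; [lra|]. intros; simpl; lra. }
  generalize (filter_and _ _ H H2). apply filter_imp. intros [a b] [Pab [Ha Hb]]. simpl in *.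
  exists (RInt g a b). split; auto.
  apply (RInt_correct (V := R_CompleteNormedModule)). apply ex_RInt_cpos; auto.
Qed.

Lemma ex_gen_dom (f g : R -> R) lg :
 (forall t, 0 < t -> continuous f t) -> (forall t, 0 < t -> continuous g t) ->
 (forall t, 0 < t -> Rabs (f t) <= g t) ->
 is_RInt_gen g FA FB lg -> ex_RInt_gen f FA FB.
Proof.
  intros Hf Hg Hfg HL. apply gen_to_lim in HL.
  assert (Cg := proj2 (filterlim_locally_cauchy (F := filter_prod FA FB) (RI g)) (ex_intro _ lg HL)).
  assert (Cf: exists y : R_CompleteSpace, filterlim (RI f) (filter_prod FA FB) (locally y)).
  { apply filterlim_locally_cauchy. intros eps.
    destruct (Cg (pos_div_2 eps)) as [P [HP HPc]].
    destruct (fprod_elim _ HP) as [d [M [Hd HdM]]].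
    exists (fun ab : R * R => 0 < fst ab < d /\ Rmax M 0 < snd ab).
    split. { apply fprod_intro with d (Rmax M 0); auto. }
    intros [a b] [a' b'] [Ha Hb] [Ha' Hb']; simpl in *.
    assert (HM1 := Rmax_l M 0). assert (HM2 := Rmax_r M 0).
    apply ballR.
    assert (E : forall u v, 0 < u -> 0 < v -> ex_RInt f u v) by (intros; apply ex_RInt_cpos; auto).
    assert (Eg : forall u v, 0 < u -> 0 < v -> ex_RInt g u v) by (intros; apply ex_RInt_cpos; auto).
    assert (K : RInt f a' b' - RInt f a b = RInt f a' a + RInt f b b').
    { rewrite <- (chasR f a' a b'), <- (chasR f a b b'); try apply E; try lra. }
    rewrite K.
    assert (Pab := HdM a b ltac:(lra) ltac:(lra)).
    assert (Pa'b := HdM a' b ltac:(lra) ltac:(lra)).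
    assert (Pa'b' := HdM a' b' ltac:(lra) ltac:(lra)).
    assert (B1 := HPc _ _ Pab Pa'b). assert (B2 := HPc _ _ Pa'b Pa'b').
    assert (B1' : Rabs (RInt g a' b - RInt g a b) < eps/2) by exact B1.
    assert (B2' : Rabs (RInt g a' b' - RInt g a' b) < eps/2) by exact B2.
    assert (G1 : RInt g a' a = RInt g a' b - RInt g a b).
    { rewrite <- (chasR g a' a b); try apply Eg; try lra. }
    assert (G2 : RInt g b b' = RInt g a' b' - RInt g a' b).
    { rewrite <- (chasR g a' b b'); try apply Eg; try lra. }
    assert (D1 := RInt_abs_dom f g a' a ltac:(lra) ltac:(lra) Hf Hg Hfg).
    assert (D2 := RInt_abs_dom f g b b' ltac:(lra) ltac:(lra) Hf Hg Hfg).
    rewrite G1 in D1. rewrite G2 in D2.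
    eapply Rle_lt_trans. apply Rabs_triang.
    lra. }
  destruct Cf as [y Hy]. exists y. apply lim_to_gen; auto.
Qed.

Lemma gen_uniq (f : R -> R) (l : R) : is_RInt_gen f FA FB l -> @eq R (RInt_gen f FA FB) l.
Proof. intros H. apply (is_RInt_gen_unique (V := R_CompleteNormedModule)); auto. Qed.

Lemma gen_le (f g : R -> R) lf lg : (forall t, 0 < t -> continuous f t) -> (forall t, 0 < t -> continuous g t) ->
  (forall t, 0 < t -> f t <= g t) -> is_RInt_gen f FA FB lf -> is_RInt_gen g FA FB lg -> lf <= lg.
Proof.
  intros Hf Hg Hfg H1 H2. apply gen_to_lim in H1. apply gen_to_lim in H2.
  assert (K := filterlim_le (F := filter_prod FA FB) (RI f) (RI g) lf lg).
  simpl in K. apply K; auto.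
  apply fprod_intro with 1 1; [lra|]. intros a b Ha Hb; simpl.
  apply RInt_le; try lra; try (apply ex_RInt_cpos; auto; lra).
  intros x Hx. apply Hfg. lra.
Qed.

Lemma gen_ftc (F f : R -> R) la lb : (forall t, 0 < t -> is_derive F t (f t)) -> (forall t, 0 < t -> continuous f t) ->
  filterlim F FA (locally la) -> filterlim F FB (locally lb) -> is_RInt_gen f FA FB (lb - la).
Proof.
  intros HD Hc HA HB. apply lim_to_gen; auto.
  apply filterlim_locally. intros eps.
  assert (HA' := proj1 (filterlim_locally F la) HA (pos_div_2 eps)).
  assert (HB' := proj1 (filterlim_locally F lb) HB (pos_div_2 eps)).
  apply ar0_elim in HA'. apply pinf_elim in HB'.
  destruct HA' as [d [Hd HA']]. destruct HB' as [M HB'].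
  apply fprod_intro with d (Rmax M 1); auto. intros a b Ha Hb.
  assert (HM1 := Rmax_l M 1). assert (HM2 := Rmax_r M 1).
  apply ballR. simpl.
  assert (E : RInt f a b = F b - F a).
  { apply (is_RInt_unique (V:=R_CompleteNormedModule)). apply (is_RInt_derive (V:=R_CompleteNormedModule)).
    - intros x Hx. apply HD. assert (Rmin a b > 0) by (unfold Rmin; destruct Rle_dec; lra). lra.
    - intros x Hx. apply Hc. assert (Rmin a b > 0) by (unfold Rmin; destruct Rle_dec; lra). lra. }
  rewrite E.
  assert (X1 : Rabs (F a - la) < eps/2) by exact (HA' a Ha).
  assert (X2 : Rabs (F b - lb) < eps/2) by (exact (HB' b ltac:(lra))).
  replace (F b - F a - (lb - la)) with ((F b - lb) - (F a - la)) by ring.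
  eapply Rle_lt_trans. apply Rabs_triang. rewrite Rabs_Ropp. lra.
Qed.

Lemma lim_ar0 (F : R -> R) l C d : 0 < d -> (forall t, 0 < t < d -> Rabs (F t - l) <= C * t) ->
  filterlim F FA (locally l).
Proof.
  intros Hd H. apply filterlim_locally. intros eps.
  assert (HC : 0 <= Rabs C) by apply Rabs_pos.
  set (e := Rmin d (eps / (Rabs C + 1))).
  assert (He : 0 < e). { unfold e, Rmin; destruct Rle_dec; auto. apply Rdiv_lt_0_compat; [apply cond_pos|lra]. }
  apply ar0_intro with e; auto. intros t Ht. apply ballR.
  assert (Hd1 : e <= d) by apply Rmin_l. assert (He1 : e <= eps / (Rabs C + 1)) by apply Rmin_r.
  eapply Rle_lt_trans. apply H. lra.
  assert (C * t <= Rabs C * t) by (apply Rmult_le_compat_r; [lra|apply Rle_abs]).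
  assert (Rabs C * t <= Rabs C * e) by (apply Rmult_le_compat_l; lra).
  assert (Rabs C * e < eps).
  { apply Rle_lt_trans with (Rabs C * (eps / (Rabs C + 1))). apply Rmult_le_compat_l; lra.
    assert (Hp := cond_pos eps).
    assert (eps - Rabs C * (eps / (Rabs C + 1)) = eps / (Rabs C + 1)) by (field; lra).
    assert (0 < eps / (Rabs C + 1)) by (apply Rdiv_lt_0_compat; lra). lra. }
  lra.
Qed.

Lemma lim_pinf (F : R -> R) l C M : (forall t, M < t -> Rabs (F t - l) <= C / t) ->
  filterlim F FB (locally l).
Proof.
  intros H. apply filterlim_locally. intros eps.
  assert (HC : 0 <= Rabs C) by apply Rabs_pos.
  assert (Hp := cond_pos eps).
  set (N := Rmax (Rmax M 1) ((Rabs C + 1) / eps)).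
  apply pinf_intro with N. intros t Ht. apply ballR.
  assert (N1 : Rmax M 1 <= N) by apply Rmax_l. assert (N2 : (Rabs C + 1) / eps <= N) by apply Rmax_r.
  assert (M1 := Rmax_l M 1). assert (M2 := Rmax_r M 1).
  eapply Rle_lt_trans. apply H. lra.
  assert (Ht0 : 0 < t) by lra.
  apply Rle_lt_trans with (Rabs C / t).
  { unfold Rdiv. apply Rmult_le_compat_r. left; apply Rinv_0_lt_compat; lra. apply Rle_abs. }
  apply Rmult_lt_reg_r with t; auto. unfold Rdiv. rewrite Rmult_assoc, Rinv_l; [|lra].
  assert ((Rabs C + 1) / eps * eps = Rabs C + 1) by (field; lra).
  assert ((Rabs C + 1) / eps * eps < t * eps) by (apply Rmult_lt_compat_r; lra).
  lra.
Qed.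

Lemma ln_le (s : R) : 0 < s -> ln s <= s - 1.
Proof. intros Hs. assert (H := exp_ineq1_le (ln s)). rewrite exp_ln in H; lra. Qed.

Lemma exp_mult_nat (N : nat) x : exp (INR N * x) = exp x ^ N.
Proof.
  induction N as [|N IH]. simpl. rewrite Rmult_0_l. apply exp_0.
  rewrite S_INR. replace ((INR N + 1) * x) with (INR N * x + x) by ring.
  rewrite exp_plus, IH. simpl. ring.
Qed.

Lemma pow_exp_bound (N : nat) t : (0 < N)%nat -> 0 < t -> t ^ N * exp (- t) <= INR N ^ N.
Proof.
  intros HN Ht. assert (HN' : 0 < INR N) by (apply lt_0_INR; lia).
  assert (H1 : t / INR N <= exp (t / INR N)) by (assert (H := exp_ineq1_le (t / INR N)); lra).
  assert (H2 : (t / INR N) ^ N <= exp (t / INR N) ^ N).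
  { apply pow_incr. split; [|exact H1]. apply Rlt_le, Rdiv_lt_0_compat; lra. }
  rewrite <- exp_mult_nat in H2. replace (INR N * (t / INR N)) with t in H2 by (field; lra).
  unfold Rdiv in H2. rewrite Rpow_mult_distr in H2.
  assert (Hi : 0 < (/ INR N) ^ N) by (apply pow_lt, Rinv_0_lt_compat; lra).
  assert (He : 0 < exp t) by apply exp_pos.
  rewrite exp_Ropp.
  assert (E : INR N ^ N * (/ INR N) ^ N = 1) by (rewrite <- Rpow_mult_distr, Rinv_r; [apply pow1|lra]).
  apply Rmult_le_reg_r with ((/ INR N) ^ N * exp t); [nra|].
  replace (t ^ N * / exp t * ((/ INR N) ^ N * exp t)) with (t ^ N * (/ INR N) ^ N) by (field; lra).
  replace (INR N ^ N * ((/ INR N) ^ N * exp t)) with (exp t) by (rewrite <- Rmult_assoc, E; ring).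
  exact H2.
Qed.

Lemma pow_exp_decay (m : nat) t : 0 < t -> t ^ m * exp (- t) <= INR (S m) ^ (S m) / t.
Proof.
  intros Ht. assert (H := pow_exp_bound (S m) t ltac:(lia) Ht).
  apply Rmult_le_reg_r with t; auto.
  replace (INR (S m) ^ S m / t * t) with (INR (S m) ^ S m) by (field; lra).
  simpl in H. simpl. lra.
Qed.

Lemma pow_le_t (j : nat) t : (1 <= j)%nat -> 0 < t <= 1 -> t ^ j <= t.
Proof.
  intros Hj Ht. destruct j as [|j]; [lia|]. simpl.
  assert (t ^ j <= 1 ^ j) by (apply pow_incr; lra). rewrite pow1 in H. assert (0 <= t ^ j) by (apply pow_le; lra). nra.
Qed.

Lemma exp_neg_le1 t : 0 <= t -> exp (- t) <= 1.
Proof. intros Ht. rewrite <- exp_0. destruct (Req_dec t 0). subst; rewrite Ropp_0; lra. left; apply exp_increasing; lra. Qed.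

Lemma cont_ex (f : R -> R) x : ex_derive f x -> continuous f x.
Proof. intros H. apply (ex_derive_continuous (K:=R_AbsRing) (V:=R_NormedModule)). exact H. Qed.

Definition pe (j : nat) (t : R) := t ^ j * exp (- t).

Lemma pe_cont j t : continuous (pe j) t.
Proof. apply cont_ex. unfold pe. auto_derive. auto. Qed.

Lemma pe_nonneg j t : 0 < t -> 0 <= pe j t.
Proof. intros Ht. unfold pe. apply Rmult_le_pos. apply pow_le; lra. left; apply exp_pos. Qed.

Lemma gen_lin (f g h : R -> R) a b lf lg l : is_RInt_gen f FA FB lf -> is_RInt_gen g FA FB lg ->
  (forall t, 0 < t -> h t = a * f t + b * g t) -> l = a * lf + b * lg -> is_RInt_gen h FA FB l.
Proof.
  intros Hf Hg Hh Hl.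
  assert (H := is_RInt_gen_plus _ _ _ _ (is_RInt_gen_scal _ a _ Hf) (is_RInt_gen_scal _ b _ Hg)).
  replace l with (plus (scal a lf) (scal b lg)) by (rewrite Hl; reflexivity).
  eapply is_RInt_gen_ext; [|exact H].
  apply fprod_intro with 1 1; [lra|]. intros u v Hu Hv x Hx. simpl in Hx.
  rewrite Hh. reflexivity. assert (Rmin u v > 0) by (unfold Rmin; destruct Rle_dec; lra). lra.
Qed.

Lemma moment (j : nat) : is_RInt_gen (pe j) FA FB (INR (fact j)).
Proof.
  induction j as [|j IH].
  - replace (INR (fact 0)) with (0 - (-1)) by (simpl; ring).
    apply gen_ftc with (fun t => - exp (- t)).
    + intros t Ht. unfold pe. auto_derive; auto. simpl. ring.
    + intros; apply pe_cont.
    + apply lim_ar0 with 1 1; [lra|]. intros t Ht.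
      assert (H1 := exp_ineq1_le (- t)). assert (H2 := exp_neg_le1 t ltac:(lra)).
      rewrite Rabs_pos_eq; lra.
    + apply lim_pinf with 1 1. intros t Ht.
      rewrite Rminus_0_r, Rabs_Ropp, Rabs_pos_eq by (left; apply exp_pos).
      assert (H := pow_exp_decay 0 t ltac:(lra)). simpl in H. lra.
  - assert (D : is_RInt_gen (fun t => INR (S j) * pe j t - pe (S j) t) FA FB (0 - 0)).
    { apply gen_ftc with (fun t => t ^ S j * exp (- t)).
      + intros t Ht. unfold pe. auto_derive; auto. change (match j with 0%nat => 1 | S _ => INR j + 1 end) with (INR (S j)). simpl pow. ring.
      + intros t Ht. apply cont_ex. unfold pe. auto_derive; auto.
      + apply lim_ar0 with 1 1; [lra|]. intros t Ht. rewrite Rminus_0_r.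
        assert (H1 := pow_le_t (S j) t ltac:(lia) ltac:(lra)). assert (H2 := exp_neg_le1 t ltac:(lra)).
        assert (H3 : 0 <= t ^ S j) by (apply pow_le; lra). assert (H4 := exp_pos (- t)).
        rewrite Rabs_pos_eq by nra. nra.
      + apply lim_pinf with (INR (S (S j)) ^ (S (S j))) 0. intros t Ht.
        rewrite Rminus_0_r. assert (H := pow_exp_decay (S j) t Ht). rewrite Rabs_pos_eq. exact H.
        apply (pe_nonneg (S j) t Ht). }
    apply gen_lin with (fun t => INR (S j) * pe j t - pe (S j) t) (pe j) (-1) (INR (S j)) (0 - 0) (INR (fact j)); auto.
    + intros; ring.
    + rewrite fact_simpl, mult_INR. ring.
Qed.

Definition pl (j : nat) (t : R) := t ^ j * ln t * exp (- t).

Lemma pl_cont j t : 0 < t -> continuous (pl j) t.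
Proof. intros Ht. apply cont_ex. unfold pl. auto_derive. auto. Qed.

Lemma tln_bound t : 0 < t <= 1 -> t * Rabs (ln t) <= 1.
Proof.
  intros Ht. assert (H1 := ln_le (/ t) ltac:(apply Rinv_0_lt_compat; lra)).
  rewrite ln_Rinv in H1 by lra.
  assert (H2 : ln t <= 0) by (assert (H := ln_le t ltac:(lra)); lra).
  rewrite Rabs_left1 by lra.
  assert (t * / t = 1) by (field; lra). nra.
Qed.

Lemma ln_le_t t : 0 < t -> ln t <= t.
Proof. intros Ht. assert (H := ln_le t Ht). lra. Qed.

Lemma ln_nonneg t : 1 <= t -> 0 <= ln t.
Proof. intros Ht. destruct (Req_dec t 1). subst; rewrite ln_1; lra. rewrite <- ln_1. left; apply ln_increasing; lra. Qed.

Lemma pl_dom (k : nat) t : 0 < t -> Rabs (pl (S k) t) <= pe k t + pe (S (S k)) t.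
Proof.
  intros Ht. unfold pl, pe. assert (He := exp_pos (- t)).
  assert (Hk : 0 <= t ^ k) by (apply pow_le; lra).
  rewrite Rabs_mult, (Rabs_pos_eq (exp _)) by lra. rewrite Rabs_mult, (Rabs_pos_eq (t ^ S k)) by (apply pow_le; lra).
  assert (0 <= t ^ S (S k)) by (apply pow_le; lra).
  destruct (Rle_dec t 1) as [H1|H1].
  - assert (B := tln_bound t ltac:(lra)).
    replace (t ^ S k) with (t ^ k * t) by (simpl; ring).
    assert (t ^ k * t * Rabs (ln t) <= t ^ k) by nra. nra.
  - assert (B := ln_le_t t Ht). assert (B2 := ln_nonneg t ltac:(lra)).
    rewrite Rabs_pos_eq by lra.
    replace (t ^ S (S k)) with (t ^ S k * t) by (simpl; ring).
    assert (t ^ S k * ln t <= t ^ S k * t) by (apply Rmult_le_compat_l; [apply pow_le|]; lra).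
    assert (0 <= t ^ k) by (apply pow_le; lra). nra.
Qed.

Definition L (j : nat) : R := RInt_gen (pl j) FA FB.

Lemma pl_is (k : nat) : is_RInt_gen (pl (S k)) FA FB (L (S k)).
Proof.
  unfold L. apply (RInt_gen_correct (V:=R_CompleteNormedModule)).
  apply ex_gen_dom with (fun t => pe k t + pe (S (S k)) t) (INR (fact k) + INR (fact (S (S k)))).
  - intros; apply pl_cont; auto.
  - intros t Ht. apply cont_ex. unfold pe. auto_derive. auto.
  - intros; apply pl_dom; auto.
  - apply gen_lin with (pe k) (pe (S (S k))) 1 1 (INR (fact k)) (INR (fact (S (S k)))); try apply moment.
    intros; ring. ring.
Qed.

Lemma L_rec (k : nat) : (1 <= k)%nat -> L (S k) = INR (S k) * L k + INR (fact k).
Proof.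
  intros Hk. destruct k as [|k']; [lia|].
  assert (D : is_RInt_gen (fun t => INR (S (S k')) * pl (S k') t + pe (S k') t - pl (S (S k')) t) FA FB (0 - 0)).
  { apply gen_ftc with (fun t => t ^ S (S k') * ln t * exp (- t)).
    + intros t Ht. unfold pl, pe. auto_derive. auto.
      change (match k' with 0%nat => 1 | S _ => INR k' + 1 end) with (INR (S k')).
      rewrite (S_INR (S k')). simpl pow. field. lra.
    + intros t Ht. apply cont_ex. unfold pl, pe. auto_derive. auto.
    + apply lim_ar0 with 1 1; [lra|]. intros t Ht. rewrite Rminus_0_r.
      assert (B := tln_bound t ltac:(lra)).
      assert (H1 := pow_le_t (S k') t ltac:(lia) ltac:(lra)).
      assert (H2 := exp_neg_le1 t ltac:(lra)). assert (H4 := exp_pos (- t)).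
      assert (H3 : 0 <= t ^ S k') by (apply pow_le; lra).
      rewrite !Rabs_mult, (Rabs_pos_eq (exp _)) by lra. rewrite (Rabs_pos_eq (t ^ _)) by (apply pow_le; lra).
      replace (t ^ S (S k')) with (t ^ S k' * t) by (simpl; ring).
      assert (0 <= Rabs (ln t)) by apply Rabs_pos.
      assert (t ^ S k' * (t * Rabs (ln t)) <= t ^ S k' * 1) by (apply Rmult_le_compat_l; lra).
      assert (t ^ S k' * t * Rabs (ln t) <= t) by lra.
      assert (0 <= t ^ S k' * t * Rabs (ln t)) by (apply Rmult_le_pos; [apply Rmult_le_pos|]; lra).
      apply Rle_trans with (t ^ S k' * t * Rabs (ln t) * 1); [apply Rmult_le_compat_l; lra | lra].
    + apply lim_pinf with (INR (S (S k')) ^ (S (S k')) + INR (S (S (S (S k')))) ^ (S (S (S (S k'))))) 0. intros t Ht. rewrite Rminus_0_r.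
      assert (H := pl_dom (S k') t Ht). fold (pl (S (S k')) t).
      assert (H5 := pow_exp_decay (S (S (S k'))) t Ht). fold (pe (S (S (S k'))) t) in H5.
      assert (H6 := pow_exp_decay (S k') t Ht). fold (pe (S k') t) in H6.
      replace ((INR (S (S k')) ^ (S (S k')) + INR (S (S (S (S k')))) ^ (S (S (S (S k'))))) / t) with
        (INR (S (S k')) ^ (S (S k')) / t + INR (S (S (S (S k')))) ^ (S (S (S (S k')))) / t) by (field; lra).
      lra. }
  assert (A : is_RInt_gen (fun t => INR (S (S k')) * pl (S k') t + 1 * pe (S k') t) FA FB
     (INR (S (S k')) * L (S k') + 1 * INR (fact (S k')))).
  { apply gen_lin with (pl (S k')) (pe (S k')) (INR (S (S k'))) 1 (L (S k')) (INR (fact (S k'))); auto.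
    apply pl_is. apply moment. }
  assert (E : is_RInt_gen (pl (S (S k'))) FA FB (1 * (INR (S (S k')) * L (S k') + 1 * INR (fact (S k'))) + (-1) * (0 - 0))).
  { apply gen_lin with (fun t => INR (S (S k')) * pl (S k') t + 1 * pe (S k') t)
      (fun t => INR (S (S k')) * pl (S k') t + pe (S k') t - pl (S (S k')) t) 1 (-1)
      (INR (S (S k')) * L (S k') + 1 * INR (fact (S k'))) (0 - 0).
    exact A. exact D. intros; ring. reflexivity. }
  apply gen_uniq in E. unfold L at 1. rewrite E. ring.
Qed.

Lemma L_upper k : (1 <= k)%nat -> L k <= INR (fact k) * ln (INR k + 1).
Proof.
  intros Hk. destruct k as [|k']; [lia|]. set (k := S k').
  assert (Hk0 : 0 < INR k + 1) by (assert (H := pos_INR k); lra).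
  assert (G : is_RInt_gen (fun t => (ln (INR k + 1) - 1) * pe k t + / (INR k + 1) * pe (S k) t) FA FB
     ((ln (INR k + 1) - 1) * INR (fact k) + / (INR k + 1) * INR (fact (S k)))).
  { apply gen_lin with (pe k) (pe (S k)) (ln (INR k + 1) - 1) (/ (INR k + 1)) (INR (fact k)) (INR (fact (S k)));
      try apply moment; intros; reflexivity. }
  replace (INR (fact k) * ln (INR k + 1)) with ((ln (INR k + 1) - 1) * INR (fact k) + / (INR k + 1) * INR (fact (S k))).
  2:{ rewrite fact_simpl, mult_INR, S_INR. field. lra. }
  apply gen_le with (pl k) (fun t => (ln (INR k + 1) - 1) * pe k t + / (INR k + 1) * pe (S k) t); auto.
  - intros; apply pl_cont; auto.
  - intros t Ht. apply cont_ex. unfold pe. auto_derive. auto.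
  - intros t Ht. unfold pl, pe.
    assert (H := ln_le (t / (INR k + 1)) ltac:(apply Rdiv_lt_0_compat; lra)).
    rewrite ln_div in H by lra.
    assert (P : 0 <= t ^ k * exp (- t)) by (apply pe_nonneg; auto).
    replace (t ^ S k) with (t * t ^ k) by reflexivity.
    apply Rle_trans with (t ^ k * exp (- t) * (ln (INR k + 1) + t / (INR k + 1) - 1)).
    + replace (t ^ k * ln t * exp (- t)) with (t ^ k * exp (- t) * ln t) by ring.
      apply Rmult_le_compat_l; lra.
    + right. field. lra.
  - apply pl_is.
Qed.

Lemma L_lower k : (1 <= k)%nat -> INR (fact k) * ln (INR k) <= L k.
Proof.
  intros Hk. destruct k as [|k']; [lia|]. set (k := S k').
  assert (Hk0 : 0 < INR k) by (apply lt_0_INR; unfold k; lia).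
  assert (G : is_RInt_gen (fun t => (1 + ln (INR k)) * pe k t + (- INR k) * pe k' t) FA FB
     ((1 + ln (INR k)) * INR (fact k) + (- INR k) * INR (fact k'))).
  { apply gen_lin with (pe k) (pe k') (1 + ln (INR k)) (- INR k) (INR (fact k)) (INR (fact k'));
      try apply moment; intros; reflexivity. }
  replace (INR (fact k) * ln (INR k)) with ((1 + ln (INR k)) * INR (fact k) + (- INR k) * INR (fact k')).
  2:{ unfold k. rewrite fact_simpl, mult_INR. ring. }
  apply gen_le with (fun t => (1 + ln (INR k)) * pe k t + (- INR k) * pe k' t) (pl k); auto.
  - intros t Ht. apply cont_ex. unfold pe. auto_derive. auto.
  - intros; apply pl_cont; auto.
  - intros t Ht. unfold pl, pe.
    assert (H := ln_le (INR k / t) ltac:(apply Rdiv_lt_0_compat; lra)).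
    rewrite ln_div in H by lra.
    assert (H2 : t * (ln (INR k) - ln t) <= t * (INR k / t - 1)) by (apply Rmult_le_compat_l; lra).
    replace (t * (INR k / t - 1)) with (INR k - t) in H2 by (field; lra).
    assert (P : 0 <= t ^ k' * exp (- t)) by (apply pe_nonneg; auto).
    unfold k. replace (t ^ S k') with (t * t ^ k') by reflexivity. fold k.
    replace ((1 + ln (INR k)) * (t * t ^ k' * exp (- t)) + - INR k * (t ^ k' * exp (- t)))
      with (t ^ k' * exp (- t) * ((1 + ln (INR k)) * t - INR k)) by ring.
    replace (t * t ^ k' * ln t * exp (- t)) with (t ^ k' * exp (- t) * (t * ln t)) by ring.
    apply Rmult_le_compat_l; lra.
  - apply pl_is.
Qed.

Lemma exp_le x y : x <= y -> exp x <= exp y.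
Proof. intros H. destruct (Req_dec x y). subst; lra. left; apply exp_increasing; lra. Qed.

Lemma exp_t1 u : Rabs (exp u - 1) <= Rabs u * exp (Rabs u).
Proof.
  destruct (MVT_gen exp 0 u exp) as [c [Hc E]].
  - intros x _. auto_derive; auto. ring.
  - intros x _. apply (proj2 (continuity_pt_filterlim _ _)). apply (cont_ex (fun x => _)). auto_derive. auto.
  - rewrite exp_0, Rminus_0_r in E. rewrite E, Rabs_mult, Rabs_pos_eq by (left; apply exp_pos).
    rewrite Rmult_comm. apply Rmult_le_compat_l. apply Rabs_pos. apply exp_le.
    unfold Rmin, Rmax in Hc. destruct Rle_dec; [rewrite Rabs_pos_eq|rewrite Rabs_left]; lra.
Qed.

Lemma exp_t2 u : Rabs (exp u - 1 - u) <= u ^ 2 * exp (Rabs u).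
Proof.
  destruct (MVT_gen (fun x => exp x - 1 - x) 0 u (fun x => exp x - 1)) as [c [Hc E]].
  - intros x _. auto_derive; auto. ring.
  - intros x _. apply (proj2 (continuity_pt_filterlim _ _)). apply (cont_ex (fun x => _)). auto_derive. auto.
  - simpl in E. rewrite exp_0 in E. replace (1 - 1 - 0) with 0 in E by ring. rewrite Rminus_0_r in E.
    replace (exp u - 1 - u) with ((exp c - 1) * u) by lra.
    rewrite Rabs_mult. assert (H := exp_t1 c).
    assert (Hcu : Rabs c <= Rabs u).
    { unfold Rmin, Rmax in Hc. destruct Rle_dec; [rewrite !Rabs_pos_eq|rewrite !Rabs_left1]; lra. }
    assert (H2 : exp (Rabs c) <= exp (Rabs u)) by (apply exp_le; auto).
    assert (H3 := Rabs_pos c). assert (H4 := exp_pos (Rabs c)).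
    assert (H5 : Rabs c * exp (Rabs c) <= Rabs u * exp (Rabs u)).
    { apply Rmult_le_compat; lra. }
    replace (u ^ 2) with (Rabs u * Rabs u) by (rewrite <- Rabs_mult, Rabs_pos_eq; [ring| nra]).
    assert (H6 := Rabs_pos u).
    apply Rle_trans with (Rabs u * exp (Rabs u) * Rabs u). apply Rmult_le_compat_r; lra.
    right; ring.
Qed.

Lemma tln2_bound t : 0 < t <= 1 -> t * ln t ^ 2 <= 4.
Proof.
  intros Ht. set (s := sqrt t).
  assert (Hs : 0 < s) by (apply sqrt_lt_R0; lra).
  assert (Ess : s * s = t) by (apply sqrt_sqrt; lra).
  assert (Hl : ln t = 2 * ln s) by (rewrite <- Ess, ln_mult; lra).
  assert (Hs1 : s <= 1) by nra.
  assert (B := tln_bound s ltac:(lra)).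
  rewrite Hl, <- Ess. replace ((2 * ln s) ^ 2) with (4 * (Rabs (ln s) * Rabs (ln s))).
  2:{ rewrite <- Rabs_mult, Rabs_pos_eq by nra. ring. }
  assert (0 <= s * Rabs (ln s)) by (apply Rmult_le_pos; [lra|apply Rabs_pos]).
  assert (s * Rabs (ln s) * (s * Rabs (ln s)) <= 1) by nra. nra.
Qed.

Definition gf (x : R) (t : R) := Rpower t (x - 1) * exp (- t).

Lemma Gamma_gf x : Gamma x = RInt_gen (gf x) FA FB.
Proof. reflexivity. Qed.

Lemma gf_cont x t : 0 < t -> continuous (gf x) t.
Proof. intros Ht. apply cont_ex. unfold gf, Rpower. auto_derive. auto. Qed.

Lemma gf_eq j h t : 0 < t -> gf (INR (S j) + h) t = pe j t * exp (h * ln t).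
Proof.
  intros Ht. unfold gf, pe. unfold Rpower. rewrite S_INR.
  replace ((INR j + 1 + h - 1) * ln t) with (INR j * ln t + h * ln t) by ring.
  rewrite exp_plus. rewrite <- (Rpower_pow j t Ht). unfold Rpower. ring.
Qed.

Lemma exp_abs_ln t : 0 < t -> exp (Rabs (ln t)) <= / t + t.
Proof.
  intros Ht. assert (Hi : 0 < / t) by (apply Rinv_0_lt_compat; lra).
  destruct (Rle_dec t 1) as [H|H].
  - assert (H2 : ln t <= 0) by (assert (H3 := ln_le t Ht); lra).
    rewrite Rabs_left1 by lra. rewrite <- ln_Rinv by lra. rewrite exp_ln by lra. lra.
  - rewrite Rabs_pos_eq by (apply ln_nonneg; lra). rewrite exp_ln by lra. lra.
Qed.

Lemma exp_h_ln h t : Rabs h <= 1 -> 0 < t -> exp (Rabs (h * ln t)) <= / t + t.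
Proof.
  intros Hh Ht. eapply Rle_trans; [|apply exp_abs_ln; auto]. apply exp_le.
  rewrite Rabs_mult. assert (H := Rabs_pos (ln t)). assert (H2 := Rabs_pos h). nra.
Qed.

Lemma pe_shift i t : 0 < t -> pe (S i) t * (/ t + t) = pe i t + pe (S (S i)) t.
Proof. intros Ht. unfold pe. simpl. field. lra. Qed.

Lemma gf_dom i h t : Rabs h <= 1 -> 0 < t -> Rabs (gf (INR (S (S i)) + h) t) <= pe i t + pe (S (S i)) t.
Proof.
  intros Hh Ht. rewrite gf_eq by auto. rewrite <- pe_shift by auto.
  assert (P := pe_nonneg (S i) t Ht).
  rewrite Rabs_mult, Rabs_pos_eq by auto. rewrite Rabs_pos_eq by (left; apply exp_pos).
  apply Rmult_le_compat_l; auto. eapply Rle_trans; [|apply exp_h_ln; eauto].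
  apply exp_le, Rle_abs.
Qed.

Lemma gf_is i h : Rabs h <= 1 -> is_RInt_gen (gf (INR (S (S i)) + h)) FA FB (Gamma (INR (S (S i)) + h)).
Proof.
  intros Hh. rewrite Gamma_gf. apply (RInt_gen_correct (V:=R_CompleteNormedModule)).
  apply ex_gen_dom with (fun t => pe i t + pe (S (S i)) t) (INR (fact i) + INR (fact (S (S i)))).
  - intros; apply gf_cont; auto.
  - intros t Ht. apply cont_ex. unfold pe. auto_derive. auto.
  - intros; apply gf_dom; auto.
  - apply gen_lin with (pe i) (pe (S (S i))) 1 1 (INR (fact i)) (INR (fact (S (S i)))); try apply moment.
    intros; ring. ring.
Qed.

Lemma Gamma_nat j : Gamma (INR (S j)) = INR (fact j).
Proof.
  assert (K : forall x, 0 < x -> pe j x = gf (INR (S j)) x).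
  { intros x Hx. rewrite <- (Rplus_0_r (INR (S j))). rewrite gf_eq by lra. rewrite Rmult_0_l, exp_0. ring. }
  rewrite Gamma_gf. apply gen_uniq. eapply is_RInt_gen_ext; [|apply moment].
  apply fprod_intro with 1 1; [lra|]. intros u v Hu Hv x Hx. simpl in Hx.
  assert (Rmin u v > 0) by (unfold Rmin; destruct Rle_dec; lra).
  apply K. lra.
Qed.

Lemma gen_abs_le (f g : R -> R) lf lg : (forall t, 0 < t -> continuous f t) -> (forall t, 0 < t -> continuous g t) ->
  (forall t, 0 < t -> Rabs (f t) <= g t) -> is_RInt_gen f FA FB lf -> is_RInt_gen g FA FB lg -> Rabs lf <= lg.
Proof.
  intros Hf Hg Hfg H1 H2. apply Rabs_le. split.
  - assert (H3 : is_RInt_gen (fun t => - g t) FA FB (- lg)).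
    { apply gen_lin with g g (-1) 0 lg lg; auto. intros; ring. ring. }
    apply gen_le with (fun t => - g t) f; auto.
    + intros t Ht. apply (continuous_opp (K:=R_AbsRing) (V:=R_NormedModule) g). auto.
    + intros t Ht. assert (H := Hfg t Ht). assert (H4 := Rle_abs (- f t)). rewrite Rabs_Ropp in H4. lra.
  - apply gen_le with f g; auto. intros t Ht. assert (H := Hfg t Ht). assert (H4 := Rle_abs (f t)). lra.
Qed.

Lemma pe_S k t : pe (S k) t = t * pe k t.
Proof. unfold pe; simpl; ring. Qed.

Lemma pl_pe k t : pl k t = pe k t * ln t.
Proof. unfold pl, pe; ring. Qed.

Lemma Q_bound i t : 0 < t ->
  pe (S (S i)) t * ln t ^ 2 * (/ t + t) <= 8 * pe i t + 2 * pe (S (S (S (S (S i))))) t.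
Proof.
  intros Ht.
  replace (pe (S (S i)) t * ln t ^ 2 * (/ t + t)) with (ln t ^ 2 * (pe (S (S i)) t * (/ t + t))) by ring.
  rewrite pe_shift by auto. rewrite !pe_S.
  assert (P0 := pe_nonneg i t Ht). assert (P5 := pe_nonneg (S (S (S (S (S i))))) t Ht).
  rewrite !pe_S in P5.
  assert (L2 : 0 <= ln t ^ 2) by (apply pow2_ge_0).
  destruct (Rle_dec t 1) as [H|H].
  - assert (B := tln2_bound t ltac:(lra)).
    assert (T1 : ln t ^ 2 * (t * pe i t) <= 4 * pe i t).
    { replace (ln t ^ 2 * (t * pe i t)) with ((t * ln t ^ 2) * pe i t) by ring.
      apply Rmult_le_compat_r; lra. }
    assert (T2 : ln t ^ 2 * (t * (t * (t * pe i t))) <= 4 * pe i t).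
    { replace (ln t ^ 2 * (t * (t * (t * pe i t)))) with ((t * ln t ^ 2) * ((t * t) * pe i t)) by ring.
      assert (0 <= t * ln t ^ 2) by nra.
      assert (t * t * pe i t <= pe i t) by (assert (t * t <= 1) by nra; nra).
      assert (0 <= t * t * pe i t) by nra.
      apply Rle_trans with (4 * (t * t * pe i t)). apply Rmult_le_compat_r; lra. lra. }
    lra.
  - assert (B := ln_le_t t Ht). assert (B2 := ln_nonneg t ltac:(lra)).
    assert (Lt : ln t ^ 2 <= t * t) by nra.
    set (p := pe i t) in *.
    assert (0 <= t * p) by nra. assert (0 <= t * (t * (t * p))) by (repeat (apply Rmult_le_pos; try lra)).
    assert (T1 : ln t ^ 2 * (t * p) <= t * t * (t * p)) by (apply Rmult_le_compat_r; lra).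
    assert (T2 : ln t ^ 2 * (t * (t * (t * p))) <= t * t * (t * (t * (t * p)))) by (apply Rmult_le_compat_r; lra).
    assert (T3 : t * t * (t * p) <= t * t * (t * (t * (t * p)))).
    { assert (t * p <= t * (t * (t * p))).
      { replace (t * (t * (t * p))) with ((t * t) * (t * p)) by ring.
        assert (1 <= t * t) by nra. nra. }
      apply Rmult_le_compat_l; nra. }
    replace (t * (t * (t * (t * (t * p))))) with (t * t * (t * (t * (t * p)))) by ring.
    lra.
Qed.

Lemma diff_bound i h : 0 < Rabs h <= 1 ->
  Rabs ((Gamma (INR (S (S (S i))) + h) - Gamma (INR (S (S (S i))))) / h - L (S (S i)))
   <= Rabs h * (8 * INR (fact i) + 2 * INR (fact (S (S (S (S (S i))))))).
Proof.
  intros Hh. assert (Hh0 : h <> 0) by (intro E; subst; rewrite Rabs_R0 in Hh; lra).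
  set (n := INR (S (S (S i)))).
  assert (GA := gf_is (S i) h ltac:(lra)). assert (G0 := gf_is (S i) 0 ltac:(rewrite Rabs_R0; lra)).
  fold n in GA, G0.
  assert (A := gen_lin _ _ (fun t => / h * gf (n + h) t + (- / h) * gf (n + 0) t) (/ h) (- / h) _ _ _ GA G0
     (fun t _ => eq_refl) eq_refl).
  assert (B := gen_lin _ _ (fun t => 1 * (/ h * gf (n + h) t + (- / h) * gf (n + 0) t) + (-1) * pl (S (S i)) t)
     1 (-1) _ _ _ A (pl_is (S i)) (fun t _ => eq_refl) eq_refl).
  assert (G := gen_lin _ _ (fun t => Rabs h * 8 * pe i t + Rabs h * 2 * pe (S (S (S (S (S i))))) t)
     (Rabs h * 8) (Rabs h * 2) _ _ _ (moment i) (moment (S (S (S (S (S i)))))) (fun t _ => eq_refl) eq_refl).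
  assert (K : Rabs (1 * (/ h * Gamma (n + h) + - / h * Gamma (n + 0)) + -1 * L (S (S i))) <=
     Rabs h * 8 * INR (fact i) + Rabs h * 2 * INR (fact (S (S (S (S (S i))))))).
  2:{ rewrite Rplus_0_r in K.
    replace ((Gamma (n + h) - Gamma n) / h - L (S (S i))) with
      (1 * (/ h * Gamma (n + h) + - / h * Gamma n) + -1 * L (S (S i))) by (field; auto).
    eapply Rle_trans; [exact K|]. right; ring. }
  apply (gen_abs_le (fun t => 1 * (/ h * gf (n + h) t + (- / h) * gf (n + 0) t) + (-1) * pl (S (S i)) t)
     (fun t => Rabs h * 8 * pe i t + Rabs h * 2 * pe (S (S (S (S (S i))))) t)); [| | |exact B|exact G].
  - intros t Ht; apply cont_ex; unfold gf, pl, Rpower; auto_derive; auto.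
  - intros t Ht; apply cont_ex; unfold pe; auto_derive; auto.
  - intros t Ht. simpl.
    unfold n. rewrite !gf_eq by auto. rewrite pl_pe. rewrite Rmult_0_l, exp_0.
    set (p := pe (S (S i)) t). assert (Pp : 0 <= p) by (apply pe_nonneg; auto).
    replace (1 * (/ h * (p * exp (h * ln t)) + - / h * (p * 1)) + -1 * (p * ln t))
      with (p * (exp (h * ln t) - 1 - h * ln t) * / h) by (field; auto).
    rewrite Rabs_mult, Rabs_mult, (Rabs_pos_eq p), Rabs_inv by auto.
    assert (T := exp_t2 (h * ln t)). assert (E := exp_h_ln h t ltac:(lra) Ht).
    assert (Q := Q_bound i t Ht). fold p in Q.
    assert (L2 : 0 <= ln t ^ 2) by apply pow2_ge_0.
    assert (Ea := exp_pos (Rabs (h * ln t))).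
    assert (S1 : Rabs (exp (h * ln t) - 1 - h * ln t) <= Rabs h * Rabs h * (ln t ^ 2 * (/ t + t))).
    { eapply Rle_trans; [exact T|].
      replace ((h * ln t) ^ 2) with (Rabs h * Rabs h * ln t ^ 2).
      2:{ rewrite <- Rabs_mult, Rabs_pos_eq by nra. ring. }
      assert (0 <= Rabs h * Rabs h * ln t ^ 2) by (apply Rmult_le_pos; nra).
      replace (Rabs h * Rabs h * (ln t ^ 2 * (/ t + t))) with (Rabs h * Rabs h * ln t ^ 2 * (/ t + t)) by ring.
      apply Rmult_le_compat_l; auto. }
    assert (Hi : 0 < / Rabs h) by (apply Rinv_0_lt_compat; lra).
    apply Rle_trans with (p * (Rabs h * Rabs h * (ln t ^ 2 * (/ t + t))) * / Rabs h).
    { apply Rmult_le_compat_r; [lra|]. apply Rmult_le_compat_l; auto. }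
    replace (p * (Rabs h * Rabs h * (ln t ^ 2 * (/ t + t))) * / Rabs h) with (Rabs h * (p * ln t ^ 2 * (/ t + t))) by (field; lra).
    replace (Rabs h * 8 * pe i t + Rabs h * 2 * pe (S (S (S (S (S i))))) t) with
      (Rabs h * (8 * pe i t + 2 * pe (S (S (S (S (S i))))) t)) by ring.
    apply Rmult_le_compat_l; [lra|]. exact Q.
Qed.

Lemma Gamma_der i : is_derive Gamma (INR (S (S (S i)))) (L (S (S i))).
Proof.
  apply is_derive_Reals. intros eps Heps.
  set (C := 8 * INR (fact i) + 2 * INR (fact (S (S (S (S (S i))))))).
  assert (HC : 0 <= C) by (unfold C; assert (H1 := pos_INR (fact i)); assert (H2 := pos_INR (fact (S (S (S (S (S i))))))); lra).
  assert (Hd : 0 < Rmin 1 (eps / (C + 1))) by (unfold Rmin; destruct Rle_dec; [lra|apply Rdiv_lt_0_compat; lra]).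
  exists (mkposreal _ Hd). intros h Hh0 Hh. simpl in Hh.
  assert (H1 := Rmin_l 1 (eps / (C + 1))). assert (H2 := Rmin_r 1 (eps / (C + 1))).
  assert (Ha : 0 < Rabs h) by (apply Rabs_pos_lt; auto).
  eapply Rle_lt_trans. apply diff_bound. lra. fold C.
  assert (Rabs h * C <= eps / (C + 1) * C) by (apply Rmult_le_compat_r; lra).
  assert (eps / (C + 1) * C < eps).
  { assert (eps - eps / (C + 1) * C = eps / (C + 1)) by (field; lra).
    assert (0 < eps / (C + 1)) by (apply Rdiv_lt_0_compat; lra). lra. }
  lra.
Qed.

Lemma digamma_nat i : digamma (INR (S (S (S i)))) = L (S (S i)) / INR (fact (S (S i))).
Proof.
  unfold digamma. rewrite (is_derive_unique _ _ _ (Gamma_der i)). rewrite Gamma_nat. reflexivity.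
Qed.

Definition J (k : nat) : R := L k / INR (fact k).

Lemma fact_pos' k : 0 < INR (fact k).
Proof. apply lt_0_INR, lt_O_fact. Qed.

Lemma J_rec k : (1 <= k)%nat -> J (S k) = J k + / INR (S k).
Proof.
  intros Hk. unfold J. rewrite L_rec by auto. rewrite fact_simpl, mult_INR.
  assert (H1 := fact_pos' k). assert (H2 : 0 < INR (S k)) by (apply lt_0_INR; lia).
  field. lra.
Qed.

Lemma J_H k : (1 <= k)%nat -> J k - harmonic k = J 1 - harmonic 1.
Proof.
  intros Hk. induction k as [|k IH]; [lia|].
  destruct k as [|k]; [reflexivity|].
  assert (IH' := IH ltac:(lia)). rewrite J_rec by lia.
  change (harmonic (S (S k))) with (harmonic (S k) + / INR (S (S k))). lra.
Qed.

Lemma J_bounds k : (1 <= k)%nat -> ln (INR k) <= J k <= ln (INR k + 1).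
Proof.
  intros Hk. assert (H1 := fact_pos' k). unfold J. split.
  - apply Rmult_le_reg_r with (INR (fact k)); auto. unfold Rdiv. rewrite Rmult_assoc, Rinv_l by lra.
    rewrite Rmult_1_r, Rmult_comm. apply L_lower; auto.
  - apply Rmult_le_reg_r with (INR (fact k)); auto. unfold Rdiv. rewrite Rmult_assoc, Rinv_l by lra.
    rewrite Rmult_1_r, (Rmult_comm (ln _)). apply L_upper; auto.
Qed.

Definition cJ := J 1 - harmonic 1.

Lemma ln_succ_le x : 0 < x -> ln (x + 1) - ln x <= / x.
Proof.
  intros Hx. rewrite <- ln_div by lra. assert (H := ln_le ((x + 1) / x) ltac:(apply Rdiv_lt_0_compat; lra)).
  replace ((x + 1) / x - 1) with (/ x) in H by (field; lra). exact H.
Qed.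

Lemma gamma_lim : is_lim_seq (fun n => harmonic n - ln (INR n)) (- cJ).
Proof.
  apply is_lim_seq_le_le_loc with (fun n => - cJ) (fun n => - cJ + / INR n).
  - exists 1%nat. intros n Hn. assert (B := J_bounds n Hn). assert (E := J_H n Hn). fold cJ in E.
    assert (Hn0 : 0 < INR n) by (apply lt_0_INR; lia).
    assert (S := ln_succ_le (INR n) Hn0). lra.
  - apply is_lim_seq_const.
  - assert (Hi : is_lim_seq (fun n => / INR n) 0) by exact (is_lim_seq_inv INR p_infty is_lim_seq_INR ltac:(discriminate)).
    assert (H := is_lim_seq_plus' _ _ (- cJ) 0 (is_lim_seq_const (- cJ)) Hi). rewrite Rplus_0_r in H. exact H.
Qed.

Lemma gamma_val : euler_gamma = - cJ.
Proof. unfold euler_gamma. rewrite (is_lim_seq_unique _ _ gamma_lim). reflexivity. Qed.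

Lemma digamma_H i : digamma (INR (S (S (S i)))) = harmonic (S (S i)) - euler_gamma.
Proof.
  rewrite digamma_nat, gamma_val. fold (J (S (S i))).
  assert (E := J_H (S (S i)) ltac:(lia)). fold cJ in E. lra.
Qed.

Lemma H_le k : harmonic k <= ln (INR k + 1) + Rabs cJ.
Proof.
  destruct k as [|k]. simpl. rewrite Rplus_0_l, ln_1. assert (H := Rabs_pos cJ). lra.
  assert (B := J_bounds (S k) ltac:(lia)). assert (E := J_H (S k) ltac:(lia)). fold cJ in E.
  assert (H := Rle_abs (- cJ)). rewrite Rabs_Ropp in H. lra.
Qed.

Lemma H_nonneg k : 0 <= harmonic k.
Proof.
  induction k as [|k IH]. simpl; lra. change (harmonic (S k)) with (harmonic k + / INR (S k)).
  assert (0 < / INR (S k)) by (apply Rinv_0_lt_compat, lt_0_INR; lia). lra.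
Qed.

Fixpoint tri (m : nat) : nat := match m with O => O | S k => (tri k + k)%nat end.

Lemma two_tri m : (2 * tri m = m * m - m)%nat.
Proof. induction m as [|m IH]; simpl tri; [reflexivity|]. nia. Qed.

Lemma alpha_tri m : alpha m = tri m.
Proof. unfold alpha. rewrite <- two_tri, Nat.mul_comm. apply Nat.div_mul. lia. Qed.

Lemma beta_tri m : beta m = (tri (S m) - 1)%nat.
Proof.
  unfold beta. replace (m * m + m)%nat with (S m * S m - S m)%nat by nia.
  rewrite <- two_tri, Nat.mul_comm, Nat.div_mul by lia. reflexivity.
Qed.

Lemma tri_INR m : INR (tri m) * 2 = INR m * (INR m - 1).
Proof.
  induction m as [|m IH]. simpl; ring. simpl tri. rewrite plus_INR, S_INR.
  replace ((INR m + 1) * (INR m + 1 - 1)) with (INR m * (INR m - 1) + 2 * INR m) by ring. lra.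
Qed.

Lemma tri_ge m : (1 <= tri (m + 2))%nat.
Proof. replace (m + 2)%nat with (S (S m)) by lia. simpl. lia. Qed.

Lemma tri3 n : tri (n + 3) = (tri (n + 2) + (n + 2))%nat.
Proof. replace (n + 3)%nat with (S (n + 2)) by lia. reflexivity. Qed.

Lemma sum_H a d : (1 <= a)%nat -> @eq R (sum_n_m (fun k => / INR k) a (a + d)) (harmonic (a + d) - harmonic (a - 1)).
Proof.
  intros Ha. induction d as [|d IH].
  - rewrite Nat.add_0_r, sum_n_n. destruct a as [|a]; [lia|]. simpl (S a - 1)%nat. rewrite Nat.sub_0_r.
    change (harmonic (S a)) with (harmonic a + / INR (S a)). ring.
  - replace (a + S d)%nat with (S (a + d)) by lia. rewrite sum_n_Sm by lia. rewrite IH.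
    change (harmonic (S (a + d))) with (harmonic (a + d) + / INR (S (a + d))).
    unfold plus; simpl. ring.
Qed.

Definition cc (m : nat) := harmonic (tri m - 1).

Lemma termA_eq n : termA n = / INR (n + 2) * (cc (n + 3) - cc (n + 2)).
Proof.
  unfold termA, cc. rewrite alpha_tri, beta_tri.
  replace (tri (S (n + 2)) - 1)%nat with (tri (n + 2) + (n + 1))%nat.
  2:{ replace (S (n + 2)) with (n + 3)%nat by lia. rewrite tri3. lia. }
  rewrite sum_H by apply tri_ge. f_equal. f_equal. f_equal. rewrite tri3. lia.
Qed.

Lemma termB_eq n : termB n = cc (n + 3) / (INR (n + 2) ^ 2 + INR (n + 2)).
Proof. unfold termB, cc. rewrite alpha_tri. replace (n + 2 + 1)%nat with (n + 3)%nat by lia. reflexivity. Qed.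

Lemma INR_n2 n : INR (n + 2) = INR n + 2.
Proof. rewrite plus_INR. simpl. ring. Qed.
Lemma INR_n3 n : INR (n + 3) = INR n + 3.
Proof. rewrite plus_INR. simpl. ring. Qed.

Lemma termC_eq n : termC n = 2 * termB n - euler_gamma * (2 / ((INR n + 2) * (INR n + 3))).
Proof.
  rewrite termB_eq. unfold termC, cc. rewrite alpha_tri.
  assert (G := tri_ge n). assert (E3 := tri3 n).
  set (i := (tri (n + 3) - 3)%nat).
  assert (HT : tri (n + 3) = S (S (S i))) by (unfold i; lia).
  assert (TI := tri_INR (n + 3)). rewrite HT in TI |- *.
  rewrite digamma_H. replace (S (S (S i)) - 1)%nat with (S (S i)) by lia.
  rewrite INR_n3 in TI. rewrite INR_n2.
  assert (Hn := pos_INR n).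
  assert (HS : INR (S (S (S i))) = (INR n + 3) * (INR n + 2) / 2) by (apply Rmult_eq_reg_r with 2; [rewrite TI; field|lra]).
  rewrite HS. field. repeat split; nra.
Qed.

Lemma sumf n : @eq R (sum_n (fun k => 2 / ((INR k + 2) * (INR k + 3))) n) (1 - 2 / (INR n + 3)).
Proof.
  induction n as [|n IH].
  - rewrite sum_O. simpl. field.
  - rewrite sum_Sn. rewrite IH. rewrite S_INR.
    change (plus ?x ?y) with (Rplus x y). assert (Hn := pos_INR n).
    field. repeat split; lra.
Qed.

Lemma inv_lim (a : R) : 0 < a -> is_lim_seq (fun n => / (INR n + a)) 0.
Proof.
  intros Ha. apply is_lim_seq_le_le_loc with (fun _ => 0) (fun n => / INR n).
  - exists 1%nat. intros n Hn. assert (H : 0 < INR n) by (apply lt_0_INR; lia). split.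
    + left; apply Rinv_0_lt_compat; lra.
    + apply Rinv_le_contravar; lra.
  - apply is_lim_seq_const.
  - exact (is_lim_seq_inv INR p_infty is_lim_seq_INR ltac:(discriminate)).
Qed.

Lemma series_f : is_series (fun k => 2 / ((INR k + 2) * (INR k + 3))) 1.
Proof.
  unfold is_series. change (is_lim_seq (sum_n (fun k => 2 / ((INR k + 2) * (INR k + 3)))) 1).
  apply is_lim_seq_ext with (fun n => 1 + (-2) * / (INR n + 3)).
  { intros n. rewrite sumf. unfold Rdiv. ring. }
  replace (Finite 1) with (Finite (1 + (-2) * 0)) by (f_equal; ring).
  apply is_lim_seq_plus'. apply is_lim_seq_const.
  apply is_lim_seq_mult'. apply is_lim_seq_const. apply inv_lim. lra.
Qed.

Lemma cc_nonneg m : 0 <= cc m.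
Proof. apply H_nonneg. Qed.

Lemma ln_mono x y : 0 < x -> x <= y -> ln x <= ln y.
Proof. intros Hx Hxy. destruct (Req_dec x y). subst; lra. left; apply ln_increasing; lra. Qed.

Lemma cc_le n : cc (n + 2) <= 2 * ln (INR n + 2) + Rabs cJ.
Proof.
  unfold cc. eapply Rle_trans. apply H_le.
  assert (G := tri_ge n). rewrite minus_INR by lia. simpl (INR 1).
  replace (INR (tri (n + 2)) - 1 + 1) with (INR (tri (n + 2))) by ring.
  apply Rplus_le_compat_r.
  assert (Hn := pos_INR n). assert (TI := tri_INR (n + 2)). rewrite INR_n2 in TI.
  assert (Ht : 1 <= INR (tri (n + 2))) by (replace 1 with (INR 1) by reflexivity; apply le_INR; lia).
  replace (2 * ln (INR n + 2)) with (ln ((INR n + 2) * (INR n + 2))) by (rewrite ln_mult; lra).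
  apply ln_mono. lra. nra.
Qed.

Definition gT (n : nat) := (2 * ln (INR n + 2) + 3 + Rabs cJ) / (INR n + 2).

Lemma ln_succ_le' x : 0 < x -> ln (x + 1) - ln x <= / x.
Proof.
  intros Hx. rewrite <- ln_div by lra. assert (H := ln_le ((x + 1) / x) ltac:(apply Rdiv_lt_0_compat; lra)).
  replace ((x + 1) / x - 1) with (/ x) in H by (field; lra). exact H.
Qed.

Lemma termB_tel n : termB n <= gT n - gT (S n).
Proof.
  rewrite termB_eq. unfold gT. rewrite S_INR, INR_n2.
  replace (INR n + 1 + 2) with (INR n + 2 + 1) by ring.
  set (M := INR n + 2). assert (HM : 2 <= M) by (unfold M; assert (H := pos_INR n); lra).
  assert (C := cc_le (S n)). replace (S n + 2)%nat with (n + 3)%nat in C by lia.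
  rewrite S_INR in C. replace (INR n + 1 + 2) with (M + 1) in C by (unfold M; ring).
  assert (D := ln_succ_le' M ltac:(lra)).
  set (d := ln (M + 1) - ln M) in D.
  assert (Hd0 : 0 <= d) by (unfold d; assert (ln M <= ln (M + 1)) by (apply ln_mono; lra); lra).
  assert (MD : M * d <= 1) by (apply Rmult_le_reg_r with (/ M); [apply Rinv_0_lt_compat; lra|];
     replace (M * d * / M) with d by (field; lra); lra).
  assert (Di : / M <= / 2) by (apply Rinv_le_contravar; lra).
  replace ((2 * ln M + 3 + Rabs cJ) / M - (2 * ln (M + 1) + 3 + Rabs cJ) / (M + 1))
    with ((2 * ln M + 3 + Rabs cJ - 2 * M * d) / (M ^ 2 + M))  by (unfold d; field; repeat split; nra).
  unfold Rdiv. apply Rmult_le_compat_r. left; apply Rinv_0_lt_compat; nra.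
  unfold d in *. lra.
Qed.

Lemma termB_nonneg n : 0 <= termB n.
Proof.
  rewrite termB_eq. assert (H := cc_nonneg (n + 3)). rewrite INR_n2. assert (H2 := pos_INR n).
  apply Rmult_le_pos; auto. left; apply Rinv_0_lt_compat. nra.
Qed.

Lemma gT_nonneg n : 0 <= gT n.
Proof.
  unfold gT. assert (Hn := pos_INR n).
  assert (0 <= ln (INR n + 2)) by (rewrite <- ln_1; apply ln_mono; lra).
  assert (H3 := Rabs_pos cJ). apply Rmult_le_pos. lra. left; apply Rinv_0_lt_compat; lra.
Qed.

Definition SB (N : nat) : R := sum_n termB N.
Lemma SB_S N : SB (S N) = SB N + termB (S N).
Proof. unfold SB. rewrite sum_Sn. reflexivity. Qed.
Lemma SB_0 : SB 0 = termB 0.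
Proof. unfold SB. rewrite sum_O. reflexivity. Qed.

Lemma sumB_le N : SB N <= gT 0 - gT (S N).
Proof.
  induction N as [|N IH].
  - rewrite SB_0. apply termB_tel.
  - rewrite SB_S. assert (H := termB_tel (S N)). lra.
Qed.

Lemma B_conv : exists lB : R, is_series termB lB.
Proof.
  assert (H : ex_finite_lim_seq (sum_n termB)).
  { apply ex_finite_lim_seq_incr with (gT 0).
    - intros n. fold (SB n) (SB (S n)). rewrite SB_S. assert (H := termB_nonneg (S n)). lra.
    - intros n. fold (SB n). assert (H := sumB_le n). assert (H2 := gT_nonneg (S n)). lra. }
  destruct H as [l Hl]. exists l. exact Hl.
Qed.

Lemma sumA_eq N : @eq R (sum_n termA N) (sum_n termB N + cc (N + 3) / INR (N + 3)).
Proof.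
  induction N as [|N IH].
  - rewrite !sum_O. rewrite termA_eq, termB_eq.
    assert (E : cc (0 + 2) = 0) by reflexivity. rewrite E. simpl. field.
  - rewrite !sum_Sn. change (plus ?x ?y) with (Rplus x y). rewrite IH.
    rewrite termA_eq, termB_eq.
    replace (S N + 2)%nat with (N + 3)%nat by lia. replace (S N + 3)%nat with (N + 4)%nat by lia.
    rewrite !plus_INR. simpl (INR 3). simpl (INR 4). assert (Hn := pos_INR N).
    field. repeat split; nra.
Qed.

Lemma r_lim : is_lim_seq (fun N => cc (N + 3) / INR (N + 3)) 0.
Proof.
  assert (U : is_lim_seq (fun N => INR (N + 3)) p_infty) by (apply (is_lim_seq_incr_n INR 3 p_infty); apply is_lim_seq_INR).
  assert (LL : is_lim_seq (fun N => ln (INR (N + 3)) / INR (N + 3)) 0).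
  { apply (is_lim_comp_seq (fun y => ln y / y) (fun N => INR (N + 3)) p_infty 0); auto.
    apply is_lim_div_ln_p. exists 0%nat. intros; discriminate. }
  assert (IV : is_lim_seq (fun N => / INR (N + 3)) 0).
  { exact (is_lim_seq_inv _ _ U ltac:(discriminate)). }
  apply is_lim_seq_le_le with (fun _ => 0) (fun N => 2 * (ln (INR (N + 3)) / INR (N + 3)) + Rabs cJ * / INR (N + 3)).
  - intros N. assert (Hp : 0 < INR (N + 3)) by (apply lt_0_INR; lia). split.
    + apply Rmult_le_pos. apply cc_nonneg. left; apply Rinv_0_lt_compat; lra.
    + assert (C := cc_le (S N)). replace (S N + 2)%nat with (N + 3)%nat in C by lia.
      replace (INR (S N) + 2) with (INR (N + 3)) in C by (rewrite INR_n3, S_INR; ring).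
      unfold Rdiv. replace (2 * (ln (INR (N + 3)) * / INR (N + 3)) + Rabs cJ * / INR (N + 3))
        with ((2 * ln (INR (N + 3)) + Rabs cJ) * / INR (N + 3)) by ring.
      apply Rmult_le_compat_r; [left; apply Rinv_0_lt_compat; lra| exact C].
  - apply is_lim_seq_const.
  - assert (X := is_lim_seq_plus' _ _ _ _ (is_lim_seq_mult' _ _ 2 0 (is_lim_seq_const 2) LL)
       (is_lim_seq_mult' _ _ (Rabs cJ) 0 (is_lim_seq_const _) IV)).
    replace (2 * 0 + Rabs cJ * 0) with 0 in X by ring. exact X.
Qed.

Theorem mainTheorem4 :
  ex_series termA /\ ex_series termB /\ ex_series termC /\
  Series termA = Series termB /\
  Series termB = euler_gamma / 2 + / 2 * Series termC.
Proof.
  destruct B_conv as [lB HB].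
  assert (HA : is_series termA lB).
  { unfold is_series. change (is_lim_seq (sum_n termA) lB).
    apply is_lim_seq_ext with (fun N => sum_n termB N + cc (N + 3) / INR (N + 3)).
    { intros N. symmetry. apply sumA_eq. }
    assert (X := is_lim_seq_plus' _ _ _ _ HB r_lim). rewrite Rplus_0_r in X. exact X. }
  assert (HC : is_series termC (2 * lB - euler_gamma * 1)).
  { apply is_series_ext with (fun n => plus (scal 2 (termB n)) (opp (scal euler_gamma (2 / ((INR n + 2) * (INR n + 3)))))).
    { intros n. rewrite termC_eq. reflexivity. }
    assert (X := is_series_minus _ _ _ _ (is_series_scal (K:=R_AbsRing) 2 _ _ HB)
       (is_series_scal (K:=R_AbsRing) euler_gamma _ _ series_f)).
    exact X. }
  split; [exists lB; exact HA|]. split; [exists lB; exact HB|]. split; [eexists; exact HC|].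
  rewrite (is_series_unique _ _ HA), (is_series_unique _ _ HB), (is_series_unique _ _ HC).
  split; [reflexivity|]. field.
Qed.
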